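(* Let $P=(\succ_1,\dots,\succ_n)$ and $P'=(\succ'_1,\dots,\succ'_n)$ be two preference profiles over the same set of agents $N$ and the same set of houses $H$. Then $G_P=G_{P'}$ (the two profiles induce the same majority graph) if and only if $P$ and $P'$ are rotation equivalent.
   Context: Let $n\ge 1$, let $N=\{1,\dots,n\}$ be a set of agents and $H$ a set of $n$ houses. A preference profile $P=(\succ_1,\dots,\succ_n)$ assigns to each agent $x\in N$ a strict linear order $\succ_x$ on $H$. An assignment is a bijection $\mu:N\to H$; $M$ denotes the set of all assignments. Agent $x$ weakly prefers $\mu$ to $\lambda$ if $\mu(x)\succ_x\lambda(x)$ or $\mu(x)=\lambda(x)$. Let $N_{\mu,\lambda}=\{x\in N: x \text{ weakly prefers } \mu \text{ to } \lambda\}$, and write $\mu\succsim\lambda$ if $|N_{\mu,\lambda}|\ge|N_{\lambda,\mu}|$. The majority graph of $P$ is the directed graph $G_P=(M,\{(\mu,\lambda)\in M^2:\mu\succsim\lambda\})$. An ordered partition $(H_1,\dots,H_k)$ of $H$ into nonempty sets is a decomposition of a profile $P$ if for all $1\le j<\ell\le k$, all $p\in H_j$, $q\in H_\ell$ and all $x\in N$ we have $p\succ_x q$. Two profiles $P,P'$ are rotation equivalent if there is a decomposition $(H_1,\dots,H_k)$ of $P$ such that (a) for every $j\le k$, all $p,q\in H_j$ and all $x\in N$: $p\succ_x q$ iff $p\succ'_x q$; and (b) there is $r\in\{0,\dots,k-1\}$ such that $(H_{1+r},\dots,H_{k+r})$ is a decomposition of $P'$, where indices are taken cyclically ($H_{j+r}:=H_{j+r-k}$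 if $j+r>k$). *)

(* Defs.v *)
From mathcomp Require Import all_boot.
Set Implicit Arguments. Unset Strict Implicit. Unset Printing Implicit Defensive.

(* Agents are 'I_n; houses form a finite type H with #|H| = n.
   A preference profile assigns to each agent x a relation P x on H,
   read "P x p q" as "p \succ_x q". *)
Definition profile (n : nat) (H : finType) := 'I_n -> rel H.

Definition strict_linear_order (H : finType) (r : rel H) : Prop :=
  (forall p, ~~ r p p) /\
  (forall p q s, r p q -> r q s -> r p s) /\
  (forall p q, p != q -> r p q || r q p).

Definition is_profile (n : nat) (H : finType) (P : profile n H) : Prop :=
  forall x, strict_linear_order (P x).

(* assignments: bijections N -> H (injective maps; #|H| = n makes them bijective) *)
Definition is_assignment (n : nat) (H : finType) (mu : {ffun 'I_n -> H}) : bool :=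
  injectiveb mu.

Definition weakly_prefers (n : nat) (H : finType) (P : profile n H) (x : 'I_n)
  (mu la : {ffun 'I_n -> H}) : bool :=
  P x (mu x) (la x) || (mu x == la x).

Definition N_set (n : nat) (H : finType) (P : profile n H)
  (mu la : {ffun 'I_n -> H}) : {set 'I_n} :=
  [set x | weakly_prefers P x mu la].

Definition maj_succsim (n : nat) (H : finType) (P : profile n H)
  (mu la : {ffun 'I_n -> H}) : bool :=
  #|N_set P la mu| <= #|N_set P mu la|.

Definition same_majority_graph (n : nat) (H : finType) (P P' : profile n H) : Prop :=
  forall mu la : {ffun 'I_n -> H}, is_assignment mu -> is_assignment la ->
    maj_succsim P mu la = maj_succsim P' mu la.

Definition ordered_partition (H : finType) (s : seq {set H}) : Prop :=
  (forall A, A \in s -> A != set0) /\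
  (forall p : H, count (fun A : {set H} => p \in A) s = 1).

Definition decomposition (n : nat) (H : finType) (P : profile n H)
  (s : seq {set H}) : Prop :=
  ordered_partition s /\
  (forall j l, j < l < size s ->
     forall p q, p \in nth set0 s j -> q \in nth set0 s l ->
     forall x, P x p q).

(* rotation equivalence; rot r s = (H_{1+r}, ..., H_{k+r}) cyclically *)
Definition rotation_equivalent (n : nat) (H : finType) (P P' : profile n H) : Prop :=
  exists s : seq {set H},
    decomposition P s /\
    (forall A, A \in s -> forall p q, p \in A -> q \in A ->
       forall x, P x p q = P' x p q) /\
    (exists2 r, r < size s & decomposition P' (rot r s)).

(* Main.v *)
Require Import Defs.
From mathcomp Require Import all_boot fingroup perm zify.
Set Implicit Arguments. Unset Strict Implicit. Unset Printing Implicit Defensive.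

Lemma irr n H (P : profile n H) : is_profile P -> forall x p, P x p p = false.
Proof. by move=> hP x p; case: (hP x) => h _; apply/negbTE/h. Qed.

Lemma asym n H (P : profile n H) : is_profile P -> forall x p q, P x p q -> P x q p = false.
Proof.
move=> hP x p q hpq; apply/negbTE/negP => hqp.
case: (hP x) => h1 [h2 _]; by have := h1 p; rewrite (h2 _ _ _ hpq hqp).
Qed.

Lemma tot n H (P : profile n H) : is_profile P -> forall x p q, p != q -> P x q p = ~~ P x p q.
Proof.
move=> hP x p q npq; case: (hP x) => _ [_ h3]; have := h3 _ _ npq.
case E: (P x p q) => /= h; first by rewrite (asym hP E).
by [].
Qed.

Lemma trans n H (P : profile n H) : is_profile P -> forall x p q r, P x p q -> P x q r -> P x p r.
Proof. by move=> hP x p q r; case: (hP x) => _ [h _]; apply: h. Qed.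

Lemma card_N n H (P : profile n H) (mu la : {ffun 'I_n -> H}) :
  #|N_set P mu la| = \sum_i (weakly_prefers P i mu la : nat).
Proof.
rewrite -sum1_card big_mkcond /=; apply: eq_bigr => i _.
by rewrite /N_set inE; case: weakly_prefers.
Qed.

Lemma maj_loc n H (P : profile n H) (s : seq 'I_n) (mu la : {ffun 'I_n -> H}) :
  uniq s -> (forall i, i \notin s -> mu i = la i) ->
  maj_succsim P mu la = (\sum_(i <- s) (weakly_prefers P i la mu : nat)
                         <= \sum_(i <- s) (weakly_prefers P i mu la : nat)).
Proof.
move=> us hs; rewrite /maj_succsim !card_N.
rewrite (bigID (fun i => i \in s)) [X in _ <= X](bigID (fun i => i \in s)) /=.
rewrite -!(big_uniq _ us).
have -> : \sum_(i | i \notin s) (weakly_prefers P i la mu : nat)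
        = \sum_(i | i \notin s) (weakly_prefers P i mu la : nat).
  by apply: eq_bigr => i /hs e; rewrite /weakly_prefers e eqxx !orbT.
by rewrite leq_add2r.
Qed.

Definition setv n (H : finType) (mu : {ffun 'I_n -> H}) x a : {ffun 'I_n -> H} :=
  [ffun i => tperm a (mu x) (mu i)].

Lemma setv_inj n (H : finType) (mu : {ffun 'I_n -> H}) x a :
  injective mu -> injective (setv mu x a).
Proof. by move=> hi i j; rewrite !ffunE => /perm_inj; apply: hi. Qed.

Lemma setv_x n (H : finType) (mu : {ffun 'I_n -> H}) x a : setv mu x a x = a.
Proof. by rewrite ffunE tpermR. Qed.

Lemma setv_o n (H : finType) (mu : {ffun 'I_n -> H}) x a i :
  injective mu -> i != x -> mu i != a -> setv mu x a i = mu i.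
Proof.
move=> hi nix nia; rewrite ffunE tpermD //; first by rewrite eq_sym.
by rewrite (inj_eq hi) eq_sym.
Qed.

Lemma mu0_ex n (H : finType) : #|H| = n -> exists mu : {ffun 'I_n -> H}, injective mu.
Proof.
move=> hn; exists [ffun i => enum_val (cast_ord (esym hn) i)].
by move=> i j; rewrite !ffunE => /enum_val_inj /cast_ord_inj.
Qed.

Lemma swap_ex n (H : finType) (x y : 'I_n) (a b : H) : #|H| = n -> x != y -> a != b ->
  exists mu la, [/\ is_assignment mu, is_assignment la &
   forall Q : profile n H,
     maj_succsim Q mu la = (Q x b a + Q y a b <= Q x a b + Q y b a)].
Proof.
move=> hn nxy nab; have [mu0 i0] := mu0_ex hn.
pose mu1 := setv mu0 x a; pose mu := setv mu1 y b.
have i1 : injective mu1 by apply: setv_inj.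
have imu : injective mu by apply: setv_inj.
have mx : mu x = a by rewrite setv_o // ?setv_x // eq_sym.
have my : mu y = b by rewrite setv_x.
pose la : {ffun 'I_n -> H} := [ffun i => tperm a b (mu i)].
have laE : forall i, la i = tperm a b (mu i) by move=> i; exact: ffunE.
have ila : injective la by move=> i j; rewrite !laE => h; apply: imu; exact: (perm_inj h).
exists mu, la; split; try exact/injectiveP.
move=> Q; rewrite (@maj_loc _ _ _ [:: x; y]); last first.
- move=> i; rewrite !inE negb_or => /andP[nix niy]; rewrite laE tpermD //.
    by rewrite -mx (inj_eq imu) eq_sym.
  by rewrite -my (inj_eq imu) eq_sym.
- by rewrite /= inE nxy.
rewrite !big_cons !big_nil /weakly_prefers !laE mx my tpermL tpermR.
have e1 : (a == b) = false by apply/negbTE. have e2 : (b == a) = false by rewrite eq_sym; apply/negbTE.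
by rewrite e1 e2 !orbF !addn0.
Qed.

Lemma cyc_ex n (H : finType) (x y z : 'I_n) (a b c : H) : #|H| = n ->
  x != y -> x != z -> y != z -> a != b -> a != c -> b != c ->
  exists mu la, [/\ is_assignment mu, is_assignment la &
   forall Q : profile n H,
     maj_succsim Q mu la = (Q x b a + Q y c b + Q z a c <= Q x a b + Q y b c + Q z c a)].
Proof.
move=> hn nxy nxz nyz nab nac nbc; have [mu0 i0] := mu0_ex hn.
pose mu1 := setv mu0 x a; pose mu2 := setv mu1 y b; pose mu := setv mu2 z c.
have i1 : injective mu1 by apply: setv_inj.
have i2 : injective mu2 by apply: setv_inj.
have imu : injective mu by apply: setv_inj.
have m1x : mu1 x = a by rewrite setv_x.
have m2x : mu2 x = a by rewrite setv_o // ?m1x // eq_sym.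
have m2y : mu2 y = b by rewrite setv_x.
have mx : mu x = a by rewrite setv_o // ?m2x // eq_sym.
have my : mu y = b by rewrite setv_o // ?m2y // eq_sym.
have mz : mu z = c by rewrite setv_x.
pose la : {ffun 'I_n -> H} := [ffun i => tperm a c (tperm a b (mu i))].
have laE : forall i, la i = tperm a c (tperm a b (mu i)) by move=> i; exact: ffunE.
have ila : injective la by move=> i j; rewrite !laE => h; apply: imu; exact: (perm_inj (perm_inj h)).
exists mu, la; split; try exact/injectiveP.
move=> Q; rewrite (@maj_loc _ _ _ [:: x; y; z]); last first.
- move=> i; rewrite !inE !negb_or => /and3P[nix niy niz]; rewrite laE.
  have h1 : a != mu i by rewrite -mx (inj_eq imu) eq_sym.
  have h2 : b != mu i by rewrite -my (inj_eq imu) eq_sym.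
  have h3 : c != mu i by rewrite -mz (inj_eq imu) eq_sym.
  by rewrite (tpermD h1 h2) (tpermD h1 h3).
- by rewrite /= !inE negb_or nxy nxz nyz.
have lx : la x = b by rewrite laE mx tpermL tpermD // eq_sym.
have ly : la y = c by rewrite laE my tpermR tpermL.
have lz : la z = a by rewrite laE mz (tpermD nac nbc) tpermR.
rewrite !big_cons !big_nil /weakly_prefers lx ly lz mx my mz.
have e1 : (a == b) = false by apply/negbTE.
have e2 : (b == a) = false by rewrite eq_sym; apply/negbTE.
have e3 : (a == c) = false by apply/negbTE.
have e4 : (c == a) = false by rewrite eq_sym; apply/negbTE.
have e5 : (b == c) = false by apply/negbTE.
have e6 : (c == b) = false by rewrite eq_sym; apply/negbTE.
by rewrite e1 e2 e3 e4 e5 e6 !orbF !addn0 !addnA.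
Qed.

Lemma wpE n (H : finType) (P : profile n H) (mu la : {ffun 'I_n -> H}) i :
  weakly_prefers P i mu la = P i (mu i) (la i) || (mu i == la i).
Proof. by []. Qed.

Definition flip n (H : finType) (P P' : profile n H) (p q : H) :=
  [forall x, P x p q] && [forall x, P' x q p].

Lemma L2 n (H : finType) (P P' : profile n H) (x y : 'I_n) (a b : H) :
  #|H| = n -> is_profile P -> is_profile P' -> same_majority_graph P P' ->
  x != y -> a != b ->
  (P x b a && P y a b) = (P' x b a && P' y a b).
Proof.
move=> hn hP hP' SG nxy nab.
have [mu [la [im il hQ]]] := swap_ex hn nxy nab.
have := SG mu la im il; rewrite !hQ.
have nba : b != a by rewrite eq_sym.
rewrite (tot hP x nba) (tot hP y nab) (tot hP' x nba) (tot hP' y nab).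
by case: (P x b a); case: (P y a b); case: (P' x b a); case: (P' y a b).
Qed.

Lemma agree_half n (H : finType) (P P' : profile n H) (p q : H) x :
  #|H| = n -> is_profile P -> is_profile P' -> same_majority_graph P P' ->
  ~~ flip P P' p q -> P x p q -> P' x p q.
Proof.
move=> hn hP hP' SG nf hx.
have npq : p != q by apply/eqP => e; move: hx; rewrite e irr.
case: (boolP [exists v, P v q p]) => [/existsP [v hv] | /existsP hne].
  have nvx : v != x by apply/eqP => e; move: hv; rewrite e (asym hP hx).
  have := L2 hn hP hP' SG nvx npq; rewrite hv hx /=.
  by move/esym/andP => [].
have allP : [forall v, P v p q].
  apply/forallP => v; have : P v q p = false by apply/negbTE/negP => h; apply: hne; exists v.
  by rewrite (tot hP v npq) => /negbFE.
move: nf; rewrite /flip allP /= => /forallPn [w hw].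
have hw' : P' w p q by rewrite -(negbK (P' w p q)) -(tot hP' w npq).
apply/negPn/negP => hnx.
have hx' : P' x q p by rewrite (tot hP' x npq).
have nxw : x != w by apply/eqP => e; move: hw'; rewrite -e (asym hP' hx').
have := L2 hn hP hP' SG nxw npq; rewrite hx' hw' /= (asym hP hx).
by [].
Qed.

Lemma agree n (H : finType) (P P' : profile n H) (p q : H) x :
  #|H| = n -> is_profile P -> is_profile P' -> same_majority_graph P P' ->
  ~~ flip P P' p q -> ~~ flip P P' q p -> P x p q = P' x p q.
Proof.
move=> hn hP hP' SG n1 n2.
case: (eqVneq p q) => [<-|npq]; first by rewrite !irr.
case hx: (P x p q); first by rewrite (agree_half hn hP hP' SG n1 hx).
have hx2 : P x q p by rewrite (tot hP x npq) hx.
by rewrite (asym hP' (agree_half hn hP hP' SG n2 hx2)).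
Qed.

Lemma card3 (H : finType) (a b c : H) : a != b -> a != c -> b != c -> 3 <= #|H|.
Proof.
move=> nab nac nbc; rewrite cardE.
apply: (@uniq_leq_size _ [:: a; b; c]); last by move=> t _; rewrite mem_enum.
by rewrite /= !inE negb_or nab nac nbc.
Qed.

Lemma three_agents n (u : 'I_n) : 3 <= n -> exists v w : 'I_n, [&& u != v, u != w & v != w].
Proof.
move=> h3.
have h0 : 0 < n by lia. have h1 : 1 < n by lia. have h2 : 2 < n by lia.
pose o0 := Ordinal h0; pose o1 := Ordinal h1; pose o2 := Ordinal h2.
have d01 : o0 != o1 by []. have d02 : o0 != o2 by []. have d12 : o1 != o2 by [].
case: (eqVneq u o0) => [->|n0]; first by exists o1, o2.
case: (eqVneq u o1) => [->|n1]; first by exists o0, o2.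
by exists o0, o1; rewrite n0 n1.
Qed.

Lemma no_chain n (H : finType) (P P' : profile n H) (a b c : H) :
  0 < n -> #|H| = n -> is_profile P -> is_profile P' -> same_majority_graph P P' ->
  flip P P' a b -> flip P P' b c -> False.
Proof.
move=> n0 hn hP hP' SG /andP[/forallP f1 /forallP f2] /andP[/forallP g1 /forallP g2].
pose x0 := Ordinal n0.
have nab : a != b by apply/eqP => e; move: (f1 x0); rewrite e irr.
have nbc : b != c by apply/eqP => e; move: (g1 x0); rewrite e irr.
have nac : a != c by apply/eqP => e; move: (g1 x0); rewrite -e (asym hP (f1 x0)).
have [v [w /and3P [nuv nuw nvw]]] := three_agents x0 (leq_trans (card3 nab nac nbc) (eq_leq hn)).
have [mu [la [im il hQ]]] := cyc_ex hn nuv nuw nvw nab nac nbc.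
have := SG mu la im il; rewrite !hQ.
rewrite (f1 x0) (asym hP (f1 x0)) (g1 v) (asym hP (g1 v)).
rewrite (trans hP (f1 w) (g1 w)) (asym hP (trans hP (f1 w) (g1 w))).
rewrite (f2 x0) (asym hP' (f2 x0)) (g2 v) (asym hP' (g2 v)).
rewrite (trans hP' (g2 w) (f2 w)) (asym hP' (trans hP' (g2 w) (f2 w))).
by [].
Qed.

Lemma flip_split n (H : finType) (P P' : profile n H) (a b c : H) :
  0 < n -> #|H| = n -> is_profile P -> is_profile P' -> same_majority_graph P P' ->
  flip P P' a b -> c != a -> c != b -> flip P P' a c || flip P P' c b.
Proof.
move=> n0 hn hP hP' SG fab nca ncb.
case E1: (flip P P' a c) => //; case E2: (flip P P' c b) => //; exfalso.
have E3 : ~~ flip P P' c a by apply/negP => h; apply: (no_chain n0 hn hP hP' SG h fab).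
have E4 : ~~ flip P P' b c by apply/negP => h; apply: (no_chain n0 hn hP hP' SG fab h).
have Aac x : P x a c = P' x a c by apply: agree => //; rewrite E1.
have Aca x : P x c a = P' x c a by apply: agree => //; rewrite E1.
have Acb x : P x c b = P' x c b by apply: agree => //; rewrite E2.
have Abc x : P x b c = P' x b c by apply: agree => //; rewrite E2.
move: fab => /andP[/forallP f1 /forallP f2].
pose x0 := Ordinal n0.
have nab : a != b by apply/eqP => e; move: (f1 x0); rewrite e irr.
have nac : a != c by rewrite eq_sym.
have nbc : b != c by rewrite eq_sym.
case: (boolP [forall x, P x a c && P x c b]) => [/forallP hall | /forallPn [u hu]].
  have /andP[h1 h2] := hall x0.
  rewrite Aac in h1; rewrite Acb in h2.
  by move: (f2 x0); rewrite (asym hP' (trans hP' h1 h2)).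
have [v [w /and3P [nuv nuw nvw]]] := three_agents u (leq_trans (card3 nab nac nbc) (eq_leq hn)).
have nvu : v != u by rewrite eq_sym.
have nwu : w != u by rewrite eq_sym.
have nwv : w != v by rewrite eq_sym.
have C (x y z : 'I_n) : x != y -> x != z -> y != z ->
   (P x b a + P y c b + P z a c <= P x a b + P y b c + P z c a) =
   (P' x b a + P' y c b + P' z a c <= P' x a b + P' y b c + P' z c a).
  move=> h1 h2 h3; have [mu [la [im il hQ]]] := cyc_ex hn h1 h2 h3 nab nac nbc.
  by have := SG mu la im il; rewrite !hQ.
have K1 := C u v w nuv nuw nvw.
have K2 := C u w v nuw nuv nwv.
have K3 := C v u w nvu nvw nuw.
have K4 := C v w u nvw nvu nwu.
have K5 := C w u v nwu nwv nuv.
have K6 := C w v u nwv nwu nvu.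
have Rab x : P x a b = true by apply: f1.
have Rba x : P x b a = false by apply: (asym hP (f1 x)).
have R'ba x : P' x b a = true by apply: f2.
have R'ab x : P' x a b = false by apply: (asym hP' (f2 x)).
have Rca x : P x c a = ~~ P x a c by apply: tot.
have Rcb x : P x c b = ~~ P x b c by apply: tot.
have Cons x : ~~ (P x c a && P x b c).
  apply/negP => /andP[h1 h2]; by move: (trans hP h2 h1); rewrite Rba.
have Cu := Cons u; have Cv := Cons v; have Cw := Cons w.
rewrite -!Aac -!Aca -!Acb -!Abc !Rab !Rba !R'ab !R'ba in K1 K2 K3 K4 K5 K6.
rewrite !Rca !Rcb in K1 K2 K3 K4 K5 K6 Cu Cv Cw hu.
move: K1 K2 K3 K4 K5 K6 Cu Cv Cw hu.
case: (P u a c); case: (P u b c); case: (P v a c); case: (P v b c);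
  case: (P w a c); case: (P w b c); by [].
Qed.

Lemma dec_two n (H : finType) (Q : profile n H) (A B : {set H}) :
  A != set0 -> B != set0 -> (forall p, (p \in B) = (p \notin A)) ->
  (forall x p q, p \in A -> q \in B -> Q x p q) -> decomposition Q [:: A; B].
Proof.
move=> nA nB hB cr; split; first split.
- by move=> C; rewrite !inE => /orP[/eqP->|/eqP->].
- by move=> p /=; rewrite hB; case: (p \in A).
move=> j l /andP[h1 h2]; have [-> ->] : j = 0 /\ l = 1 by move: h2 => /=; lia.
by move=> p q /= hp hq x; apply: cr.
Qed.

Lemma dec_one n (H : finType) (Q : profile n H) (h : H) : decomposition Q [:: setT].
Proof.
split; first split.
- move=> C; rewrite inE => /eqP->; apply/set0Pn; exists h; by rewrite inE.
- by move=> p /=; rewrite inE.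
by move=> j l /andP[h1 h2]; exfalso; move: h2 => /=; lia.
Qed.

Lemma fwd n (H : finType) (P P' : profile n H) :
  0 < n -> #|H| = n -> is_profile P -> is_profile P' ->
  same_majority_graph P P' -> rotation_equivalent P P'.
Proof.
move=> n0 hn hP hP' SG.
have [mu0 _] := mu0_ex hn; pose h0 := mu0 (Ordinal n0).
case: (boolP [exists a, exists b, flip P P' a b]) => [/existsP [a /existsP [b fab]] | hno].
  pose A := [set p | [exists q, flip P P' p q]].
  have fA p q : flip P P' p q -> p \in A /\ q \notin A.
    move=> f; split; first by rewrite inE; apply/existsP; exists q.
    rewrite inE; apply/negP => /existsP [r fr]; exact: (no_chain n0 hn hP hP' SG f fr).
  have Af p q : p \in A -> q \notin A -> flip P P' p q.
    rewrite inE => /existsP [b0 f0] nq.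
    case: (eqVneq q b0) => [->//|nqb].
    have nqp : q != p by apply/eqP => e; move: nq; rewrite e inE; move/negP; apply; apply/existsP; exists b0.
    case/orP: (flip_split n0 hn hP hP' SG f0 nqp nqb) => // h.
    by move: nq; rewrite inE; move/negP; case; apply/existsP; exists b0.
  have nA : A != set0 by apply/set0Pn; exists a; exact: (fA _ _ fab).1.
  have nB : ~: A != set0 by apply/set0Pn; exists b; rewrite inE; exact: (fA _ _ fab).2.
  exists [:: A; ~: A]; split; [|split].
  - apply: dec_two => //; first by move=> p; rewrite inE.
    move=> x p q hp; rewrite inE => hq; by case/andP: (Af _ _ hp hq) => /forallP.
  - move=> C; rewrite !inE => /orP[/eqP->|/eqP->] p q hp hq x; apply: agree => //;
      apply/negP => /fA [h1 h2];
      by move: hp hq h1 h2; rewrite ?in_setC; case: (p \in A); case: (q \in A).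
  - exists 1 => //; rewrite /rot /=.
    apply: dec_two => //; first by move=> p; rewrite in_setC negbK.
    move=> x p q; rewrite inE => hp hq; by case/andP: (Af _ _ hq hp) => _ /forallP.
have nof p q : ~~ flip P P' p q by apply/negP => f; move/negP: hno; apply; apply/existsP; exists p; apply/existsP; exists q.
exists [:: setT]; split; [exact: dec_one h0|split].
- by move=> C _ p q _ _ x; apply: agree.
exists 0 => //; rewrite rot0; exact: dec_one h0.
Qed.

Lemma preim_sum n (H : finType) (m : {ffun 'I_n -> H}) (A : {set H}) :
  #|H| = n -> injective m -> \sum_i ((m i \in A) : nat) = #|A|.
Proof.
move=> hn im.
have bij : bijective m by apply: inj_card_bij => //; rewrite card_ord hn.
rewrite -sum1_card [RHS](reindex m); last exact: onW_bij.
rewrite [RHS]big_mkcond; apply: eq_bigr => i _; by case: (m i \in A).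
Qed.

Lemma bwd_A n (H : finType) (P P' : profile n H) (A : {set H}) :
  #|H| = n -> is_profile P ->
  (forall x p q, p \in A -> q \notin A -> P x p q) ->
  (forall x p q, P' x p q = if (p \in A) == (q \in A) then P x p q else (q \in A)) ->
  same_majority_graph P P'.
Proof.
move=> hn hP HA H2.
have E (m l : {ffun 'I_n -> H}) : injective m -> injective l ->
    #|N_set P' m l| = #|N_set P m l|.
  move=> im il; rewrite !card_N.
  have key : \sum_i ((weakly_prefers P' i m l : nat) + (m i \in A))
           = \sum_i ((weakly_prefers P i m l : nat) + (l i \in A)).
    apply: eq_bigr => i _; rewrite !wpE.
    case: (eqVneq (m i) (l i)) => [->|ne]; first by rewrite !orbT.
    rewrite !orbF H2.
    case hp: (m i \in A); case hq: (l i \in A) => /=.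
    - by [].
    - by rewrite HA ?hp ?hq.
    - by rewrite (asym hP (HA i _ _ hq (negbT hp))).
    - by [].
  move: key; rewrite !big_split /= !preim_sum //.
  by move/addIn.
move=> mu la /injectiveP im /injectiveP il.
by rewrite /maj_succsim !E.
Qed.

Lemma bwd n (H : finType) (P P' : profile n H) :
  0 < n -> #|H| = n -> is_profile P -> is_profile P' ->
  rotation_equivalent P P' -> same_majority_graph P P'.
Proof.
move=> n0 hn hP hP' [s [[[hne hcnt] decP] [agr [r hr [_ decP']]]]].
pose x0 := Ordinal n0.
pose idx (p : H) := find (fun B : {set H} => p \in B) s.
have hin p : idx p < size s /\ p \in nth set0 s (idx p).
  have hh : has (fun B : {set H} => p \in B) s by rewrite has_count hcnt.
  split; first by rewrite -has_find.
  exact: (nth_find set0 hh).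
have PO x p q : idx p < idx q -> P x p q.
  move=> h; apply: (decP (idx p) (idx q)) => //; [by rewrite h (hin q).1 | exact: (hin p).2 | exact: (hin q).2].
pose pos t := if r <= t then t - r else t + (size s - r).
have hpos t : t < size s -> nth set0 (rot r s) (pos t) = nth set0 s t.
  move=> ht; rewrite /rot nth_cat size_drop /pos.
  case: (leqP r t) => hrt.
    have -> : t - r < size s - r by lia.
    by rewrite nth_drop subnKC.
  have -> : (t + (size s - r) < size s - r) = false by lia.
  by rewrite addnK nth_take.
have PO' x p q : pos (idx p) < pos (idx q) -> P' x p q.
  move=> h; apply: (decP' (pos (idx p)) (pos (idx q))).
  - rewrite h size_rot /=; have := (hin q).1; rewrite /pos; case: (leqP r (idx q)) => h'; lia.
  - by rewrite hpos ?(hin p).1 // (hin p).2.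
  - by rewrite hpos ?(hin q).1 // (hin q).2.
apply: (@bwd_A _ _ _ _ [set p | idx p < r]) => //.
  move=> x p q; rewrite !inE => hp hq; apply: PO; lia.
move=> x p q; rewrite !inE.
case: (eqVneq p q) => [<-|npq]; first by rewrite eqxx !irr.
case: (eqVneq (idx p) (idx q)) => [e|ne].
  rewrite e eqxx; apply: esym; apply: agr (hin p).2 _ x.
    exact: mem_nth (hin p).1.
  by rewrite e (hin q).2.
have eP : P x p q = (idx p < idx q).
  case: (ltngtP (idx p) (idx q)) => h; first exact: PO.
    by rewrite (asym hP (PO x q p h)).
  by move: ne; rewrite h eqxx.
have eP' : P' x p q = (pos (idx p) < pos (idx q)).
  case: (ltngtP (pos (idx p)) (pos (idx q))) => h; first exact: PO'.
    by rewrite (asym hP' (PO' x q p h)).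
  exfalso; move: ne h; have := (hin p).1; have := (hin q).1; rewrite /pos.
  case: (leqP r (idx p)) => h1; case: (leqP r (idx q)) => h2; lia.
rewrite eP eP'; move: ne; have := (hin p).1; have := (hin q).1; rewrite /pos.
case: (leqP r (idx p)) => h1; case: (leqP r (idx q)) => h2 /= hq hp nn; apply/idP/idP; lia.
Qed.

Theorem theorem3p1 (n : nat) (H : finType) (P P' : profile n H) :
  0 < n -> #|H| = n -> is_profile P -> is_profile P' ->
  (same_majority_graph P P' <-> rotation_equivalent P P').
Proof.
move=> n0 hn hP hP'; split; [exact: fwd | exact: bwd].
Qed.
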